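(* A frame $L$ is subfit if and only if each $S\in\mathfrak{B}(\mathrm{coS}(L))$ is a meet in $\mathrm{coS}(L)$ of closed sublocales.
   Context: A frame $L$ is subfit if for all $a,b\in L$ with $a\not\le b$ there is $c\in L$ with $a\vee c=1\ne b\vee c$. A sublocale of $L$ is a subset $S\subseteq L$ closed under arbitrary meets and such that $x\to s\in S$ for all $x\in L$, $s\in S$. $\mathrm{coS}(L)$ is the set of all sublocales of $L$ ordered by reverse inclusion; it is a frame, whose meets are the joins of sublocales under inclusion ($\bigwedge S_i=\{\bigwedge M\mid M\subseteq\bigcup S_i\}$). For $a\in L$, the closed sublocale is $\mathfrak{c}(a)=\{x\in L\mid x\ge a\}$. For a frame $M$, $\mathfrak{B}(M)=\{x\in M\mid x=x^{\ast\ast}\}$, where $^\ast$ is pseudocomplement in $M$. *)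

(* Defs.v *)
Record frame := Frame {
  car :> Type;
  le : car -> car -> Prop;
  le_refl : forall x, le x x;
  le_trans : forall x y z, le x y -> le y z -> le x z;
  le_antisym : forall x y, le x y -> le y x -> x = y;
  sup : (car -> Prop) -> car;
  sup_ub : forall (S : car -> Prop) x, S x -> le x (sup S);
  sup_least : forall (S : car -> Prop) y, (forall x, S x -> le x y) -> le (sup S) y;
  meet : car -> car -> car;
  meet_lb1 : forall x y, le (meet x y) x;
  meet_lb2 : forall x y, le (meet x y) y;
  meet_glb : forall x y z, le z x -> le z y -> le z (meet x y);
  frame_distr : forall a (S : car -> Prop),
      le (meet a (sup S)) (sup (fun y => exists s, S s /\ y = meet a s))
}.

Section FrameOps.
Variable L : frame.

Definition top : L := sup L (fun _ => True).
Definition join (a b : L) : L := sup L (fun x => x = a \/ x = b).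
Definition inf (M : L -> Prop) : L := sup L (fun y => forall m, M m -> le L y m).
Definition imp (a b : L) : L := sup L (fun y => le L (meet L y a) b).

Definition subfit : Prop :=
  forall a b : L, ~ le L a b -> exists c : L, join a c = top /\ join b c <> top.

Definition sublocale (S : L -> Prop) : Prop :=
  (forall M : L -> Prop, (forall m, M m -> S m) -> S (inf M)) /\
  (forall x s, S s -> S (imp x s)).

Definition closed_sub (a : L) : L -> Prop := fun x => le L a x.

(* Meet in coS(L) (ordered by reverse inclusion) of a family of sublocales:
   the join of the sublocales under inclusion, {/\M | M subset of U S_i}. *)
Definition coS_meet {I : Type} (F : I -> L -> Prop) : L -> Prop :=
  fun x => exists M : L -> Prop, (forall m, M m -> exists i, F i m) /\ x = inf M.

Definition coS_meet2 (S T : L -> Prop) : L -> Prop :=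
  coS_meet (fun b : bool => if b then S else T).

Definition coS_le (S T : L -> Prop) : Prop := forall x, T x -> S x.

Definition coS_is_bot (S : L -> Prop) : Prop := forall x, S x.

Definition coS_pseudocompl (S T : L -> Prop) : Prop :=
  sublocale T /\ coS_is_bot (coS_meet2 S T) /\
  forall U, sublocale U -> coS_is_bot (coS_meet2 S U) -> coS_le U T.

(* S belongs to B(coS(L)): S = S** *)
Definition in_B_coS (S : L -> Prop) : Prop :=
  sublocale S /\ exists T, coS_pseudocompl S T /\ coS_pseudocompl T S.

End FrameOps.

(* Main.v *)
Require Import Defs.
From Stdlib Require Import Classical.

Section H.
Implicit Types (L : frame).

Lemma le_top {L} (x : L) : le L x (top L).
Proof. unfold top. apply sup_ub. exact I. Qed.

Lemma top_eq {L} (x : L) : le L (top L) x -> x = top L.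
Proof. intro H. apply le_antisym; [apply le_top | exact H]. Qed.

Lemma inf_lb {L} (M : L -> Prop) m : M m -> le L (inf L M) m.
Proof. intro Hm. unfold inf. apply sup_least. intros y Hy. apply Hy, Hm. Qed.

Lemma inf_glb {L} (M : L -> Prop) z : (forall m, M m -> le L z m) -> le L z (inf L M).
Proof. intro H. unfold inf. apply sup_ub. exact H. Qed.

Lemma inf_single {L} (m : L) : inf L (fun k => k = m) = m.
Proof. apply le_antisym. apply inf_lb; reflexivity. apply inf_glb. intros k ->; apply le_refl. Qed.

Lemma join_l {L} (a b : L) : le L a (join L a b).
Proof. apply sup_ub. left; reflexivity. Qed.
Lemma join_r {L} (a b : L) : le L b (join L a b).
Proof. apply sup_ub. right; reflexivity. Qed.
Lemma join_lub {L} (a b z : L) : le L a z -> le L b z -> le L (join L a b) z.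
Proof. intros Ha Hb. apply sup_least. intros x [->| ->]; assumption. Qed.

Lemma meet_comm {L} (a b : L) : le L (meet L a b) (meet L b a).
Proof. apply meet_glb; [apply meet_lb2 | apply meet_lb1]. Qed.

Lemma meet_mono {L} (a a' b b' : L) : le L a a' -> le L b b' -> le L (meet L a b) (meet L a' b').
Proof. intros. apply meet_glb. eapply le_trans. apply meet_lb1. assumption. eapply le_trans. apply meet_lb2. assumption. Qed.

Lemma imp_le {L} (z a b : L) : le L (meet L z a) b -> le L z (imp L a b).
Proof. intro H. apply sup_ub. exact H. Qed.

Lemma imp_meet {L} (a b : L) : le L (meet L (imp L a b) a) b.
Proof.
  eapply le_trans. apply meet_comm.
  eapply le_trans. apply frame_distr.
  apply sup_least. intros y [s [Hs ->]].
  eapply le_trans. apply meet_comm. exact Hs.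
Qed.

Lemma imp_ge {L} (z a b : L) : le L z (imp L a b) -> le L (meet L z a) b.
Proof. intro H. eapply le_trans. apply meet_mono. exact H. apply le_refl. apply imp_meet. Qed.

Lemma distr2 {L} (a b c : L) : le L (meet L a (join L b c)) (join L (meet L a b) (meet L a c)).
Proof.
  eapply le_trans. apply frame_distr.
  apply sup_least. intros y [s [[-> | ->] ->]]. apply join_l. apply join_r.
Qed.

Definition opn {L} (a : L) : L -> Prop := fun x => imp L a x = x.

Lemma sub_open {L} (a : L) : sublocale L (opn a).
Proof.
  split.
  - intros M HM. unfold opn. apply le_antisym.
    + apply inf_glb. intros m Mm. apply le_trans with (imp L a m).
      * apply imp_le. eapply le_trans. apply imp_meet. apply inf_lb, Mm.
      * rewrite (HM m Mm). apply le_refl.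
    + apply imp_le. apply meet_lb1.
  - intros x s Hs. unfold opn in *. apply le_antisym.
    + apply imp_le. apply le_trans with (imp L a s); [| rewrite Hs; apply le_refl]. apply imp_le.
      set (q := imp L a (imp L x s)).
      apply le_trans with (meet L (meet L q a) x).
      * apply meet_glb. apply meet_glb. eapply le_trans; apply meet_lb1.
        apply meet_lb2. eapply le_trans. apply meet_lb1. apply meet_lb2.
      * apply imp_ge. apply imp_meet.
    + apply imp_le. apply meet_lb1.
Qed.

Lemma sub_closed {L} (a : L) : sublocale L (closed_sub L a).
Proof.
  split.
  - intros M HM. apply inf_glb. exact HM.
  - intros x s Hs. unfold closed_sub in *. apply imp_le.
    eapply le_trans. apply meet_lb1. exact Hs.
Qed.

Lemma bot_oc {L} (a x : L) : exists M : L -> Prop,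
  (forall m, M m -> opn a m /\ True \/ closed_sub L a m) /\ x = inf L M.
Proof.
  exists (fun m => m = imp L a x \/ m = join L a x). split.
  - intros m [-> | ->].
    + left. split; [|exact I]. unfold opn. apply le_antisym.
      * apply imp_le. apply le_trans with (meet L (meet L (imp L a (imp L a x)) a) a).
        apply meet_glb. apply le_refl. apply meet_lb2.
        apply imp_ge. apply imp_meet.
      * apply imp_le. apply meet_lb1.
    + right. apply join_l.
  - apply le_antisym.
    + apply inf_glb. intros m [-> | ->]. apply imp_le, meet_lb1. apply join_r.
    + apply le_trans with (meet L (imp L a x) (join L a x)).
      apply meet_glb; apply inf_lb; auto.
      eapply le_trans. apply distr2. apply join_lub.
      apply imp_meet. apply meet_lb2.
Qed.

Lemma inB_open {L} (a : L) : in_B_coS L (opn a).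
Proof.
  split. apply sub_open.
  exists (closed_sub L a). split; split.
  - apply sub_closed.
  - split.
    + intro x. destruct (bot_oc a x) as [M [HM Hx]]. exists M. split; [|exact Hx].
      intros m Mm. destruct (HM m Mm) as [[H _]|H]; [exists true|exists false]; exact H.
    + intros U HU Hbot x Hx. destruct (Hbot x) as [M [HM Hx']].
      replace x with (inf L (fun m => M m /\ U m)).
      * apply (proj1 HU). intros m Hm; apply Hm.
      * apply le_antisym.
        -- rewrite Hx'. apply inf_glb. intros m Mm.
           destruct (HM m Mm) as [[|] Hm]; simpl in Hm.
           ++ unfold opn in Hm. rewrite <- Hm. replace (imp L a m) with (top L).
              apply le_top. symmetry. apply top_eq. apply imp_le.
              eapply le_trans. apply meet_lb2. eapply le_trans. exact Hx.
              rewrite Hx'. apply inf_lb. exact Mm.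
           ++ apply inf_lb. auto.
        -- apply inf_glb. intros m [Mm _]. rewrite Hx'. apply inf_lb, Mm.
  - apply sub_open.
  - split.
    + intro x. destruct (bot_oc a x) as [M [HM Hx]]. exists M. split; [|exact Hx].
      intros m Mm. destruct (HM m Mm) as [[H _]|H]; [exists false|exists true]; exact H.
    + intros U HU Hbot y Hy. destruct (Hbot y) as [M [HM Hy']].
      set (s := inf L (fun m => M m /\ U m)).
      replace y with (imp L a s).
      * apply (proj2 HU). apply (proj1 HU). intros m Hm; apply Hm.
      * apply le_antisym.
        -- unfold opn in Hy. apply le_trans with (imp L a y); [| rewrite Hy; apply le_refl].
           apply imp_le. rewrite Hy'.
           apply inf_glb. intros m Mm.
           destruct (HM m Mm) as [[|] Hm]; simpl in Hm.
           ++ eapply le_trans. apply meet_lb2. exact Hm.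
           ++ eapply le_trans. apply imp_meet. apply inf_lb. auto.
        -- apply imp_le. eapply le_trans. apply meet_lb1.
           apply inf_glb. intros m [Mm _]. rewrite Hy'. apply inf_lb, Mm.
Qed.

Lemma sub_coS_closed {L} (I : Type) (f : I -> L) :
  sublocale L (coS_meet L (fun i => closed_sub L (f i))).
Proof.
  split.
  - intros N HN.
    exists (fun m => exists n, N n /\ exists Mn : L -> Prop,
              (forall k, Mn k -> exists i, closed_sub L (f i) k) /\ n = inf L Mn /\ Mn m).
    split.
    + intros m [n [_ [Mn [H1 [_ H3]]]]]. exact (H1 m H3).
    + apply le_antisym.
      * apply inf_glb. intros m [n [Nn [Mn [_ [-> H3]]]]].
        eapply le_trans. apply inf_lb. exact Nn. apply inf_lb. exact H3.
      * apply inf_glb. intros n Nn. destruct (HN n Nn) as [Mn [H1 H2]].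
        rewrite H2. apply inf_glb. intros k Hk. apply inf_lb.
        exists n. split; [exact Nn|]. exists Mn. auto.
  - intros x s [M [HM ->]].
    exists (fun k => exists m, M m /\ k = imp L x m). split.
    + intros k [m [Mm ->]]. destruct (HM m Mm) as [i Hi]. exists i.
      unfold closed_sub in *. eapply le_trans. exact Hi. apply imp_le, meet_lb1.
    + apply le_antisym.
      * apply inf_glb. intros k [m [Mm ->]]. apply imp_le.
        eapply le_trans. apply imp_meet. apply inf_lb, Mm.
      * apply imp_le. apply inf_glb. intros m Mm.
        eapply le_trans. apply meet_mono. apply inf_lb. exists m. split. exact Mm. reflexivity.
        apply le_refl. apply imp_meet.
Qed.

End H.

Theorem lemma4p3 (L : frame) :
  subfit L <->
  (forall S : L -> Prop, in_B_coS L S ->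
     exists (I : Type) (f : I -> L),
       forall x, S x <-> coS_meet L (fun i => closed_sub L (f i)) x).
Proof.
  split.
  - intros Hsf S [HS [T [[HT _] [_ [HST_bot Hmin]]]]].
    exists {b : L | forall z, le L b z -> S z}, (fun i => proj1_sig i).
    intro x; split.
    + intro Sx. apply (Hmin _ (sub_coS_closed _ _)); [|exact Sx].
      intro y. unfold coS_meet2, coS_meet.
      set (t := inf L (fun w => T w /\ le L y w)).
      assert (Tt : T t) by (apply (proj1 HT); intros m Hm; apply Hm).
      assert (yt : le L y t) by (apply inf_glb; intros m Hm; apply Hm).
      set (p := imp L t y).
      set (N := fun m => exists e, join L t e = top L /\ m = join L p e).
      exists (fun m => m = t \/ N m). split.
      * intros m [-> | [e [He ->]]]. exists true; exact Tt. exists false; simpl.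
        assert (Hbe : forall z, le L (join L y e) z -> S z).
        { intros z Hz. destruct (HST_bot z) as [M [HM Hz']].
          set (s := inf L (fun m => M m /\ S m)).
          assert (Ss : S s) by (apply (proj1 HS); intros m Hm; apply Hm).
          replace z with s; [exact Ss|].
          apply le_antisym.
          - rewrite Hz'. apply inf_glb. intros m Mm.
            destruct (HM m Mm) as [[|] Hm]; simpl in Hm.
            + assert (zm : le L z m) by (rewrite Hz'; apply inf_lb, Mm).
              assert (tm : le L t m).
              { apply inf_lb. split. exact Hm. eapply le_trans; [|exact zm].
                eapply le_trans; [apply join_l|exact Hz]. }
              apply le_trans with (meet L s (join L t e)).
              apply meet_glb. apply le_refl. rewrite He. apply le_top.
              eapply le_trans. apply distr2. apply join_lub.
              eapply le_trans. apply meet_lb2. exact tm.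
              eapply le_trans. apply meet_lb2. eapply le_trans. apply join_r.
              eapply le_trans. exact Hz. exact zm.
            + apply inf_lb. auto.
          - apply inf_glb. intros m [Mm _]. rewrite Hz'. apply inf_lb, Mm. }
        exists (fun k => k = join L p e). split.
        -- intros k ->. exists (exist _ (join L y e) Hbe). simpl. unfold closed_sub.
           apply join_lub. eapply le_trans; [|apply join_l]. apply imp_le, meet_lb1.
           apply join_r.
        -- symmetry. apply inf_single.
      * apply le_antisym.
        -- apply inf_glb. intros m [-> | [e [_ ->]]]. exact yt.
           eapply le_trans; [|apply join_l]. apply imp_le, meet_lb1.
        -- assert (HpN : le L (inf L N) p).
           { apply NNPP. intro Hn. set (w := inf L N) in *.
             assert (Hn' : ~ le L (meet L w t) y) by (intro H'; apply Hn, imp_le, H').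
             destruct (Hsf _ _ Hn') as [c [H1 H2]]. apply H2. apply top_eq.
             assert (Htc : join L t c = top L).
             { apply top_eq. rewrite <- H1. apply join_lub.
               eapply le_trans. apply meet_lb2. apply join_l. apply join_r. }
             assert (wpc : le L w (join L p c)) by (apply inf_lb; exists c; auto).
             assert (pyc : le L p (join L y c)).
             { apply le_trans with (meet L p (join L t c)).
               apply meet_glb. apply le_refl. rewrite Htc. apply le_top.
               eapply le_trans. apply distr2. apply join_lub.
               eapply le_trans; [|apply join_l]. apply imp_meet.
               eapply le_trans; [|apply join_r]. apply meet_lb2. }
             rewrite <- H1. apply join_lub.
             eapply le_trans. apply meet_lb1. eapply le_trans. exact wpc.
             apply join_lub. exact pyc. apply join_r. apply join_r. }
           apply le_trans with (meet L p t).
           ++ apply meet_glb.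
              ** eapply le_trans; [|exact HpN]. apply inf_glb. intros m Nm. apply inf_lb. auto.
              ** apply inf_lb. auto.
           ++ apply imp_meet.
    + intros [M [HM ->]]. apply (proj1 HS). intros m Mm.
      destruct (HM m Mm) as [[b Hb] Hbm]. exact (Hb m Hbm).
  - intros H a b Hab.
    destruct (H (opn a) (inB_open a)) as [I [f Hf]].
    assert (Ox : opn a (imp L a b)).
    { unfold opn. apply le_antisym.
      - apply imp_le. apply le_trans with (meet L (meet L (imp L a (imp L a b)) a) a).
        apply meet_glb. apply le_refl. apply meet_lb2. apply imp_ge, imp_meet.
      - apply imp_le, meet_lb1. }
    destruct (proj1 (Hf _) Ox) as [M [HM Hx]].
    destruct (classic (exists m, M m /\ ~ le L a m)) as [[m [Mm Ham]] | Hn].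
    + destruct (HM m Mm) as [i Hi]. unfold closed_sub in Hi.
      assert (Oi : opn a (join L a (f i))).
      { apply (proj2 (Hf _)). exists (fun k => k = join L a (f i)). split.
        intros k ->. exists i. apply join_r. symmetry; apply inf_single. }
      assert (Ti : join L a (f i) = top L).
      { unfold opn in Oi. rewrite <- Oi. apply top_eq. apply imp_le.
        eapply le_trans. apply meet_lb2. apply join_l. }
      exists m. split.
      * apply top_eq. rewrite <- Ti. apply join_lub. apply join_l.
        eapply le_trans. exact Hi. apply join_r.
      * intro E. apply Ham. eapply le_trans. apply le_top. rewrite <- E.
        apply join_lub; [|apply le_refl].
        eapply le_trans. apply imp_le with (a := a). apply meet_lb1.
        rewrite Hx. apply inf_lb, Mm.
    + exfalso. apply Hab.
      assert (aM : le L a (imp L a b)).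
      { rewrite Hx. apply inf_glb. intros m Mm. apply NNPP. intro C. apply Hn. eauto. }
      apply le_trans with (meet L a a). apply meet_glb; apply le_refl.
      apply imp_ge, aM.
Qed.
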